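(* There is an absolute constant $C>0$ such that the following holds. Let $d$ and $n$ be integers with $1\le d\le n$, let $E$ be a nonempty family of subsets of $[n]$ each of size at most $d$, and let $p$ be an integer with $1\le p\le \min\{|e'\setminus e| : e,e'\in E,\ e\neq e'\}$. Then there exists a non-adaptive group testing algorithm that finds the defective hyperedge in $E$ and uses at most $C\,\frac{d}{p}\log|E|$ tests; that is, there are pools $T_1,\dots,T_t\subseteq[n]$ with $t\le C\frac dp\log|E|$ such that $r(e)\neq r(e')$ for all distinct $e,e'\in E$.
   Context: Group testing on a hypergraph: the items are $[n]=\{1,\dots,n\}$, $E$ is a family of subsets of $[n]$ (hyperedges), and exactly one hyperedge $e^*\in E$ is defective (unknown). A test on a pool $T\subseteq[n]$ is positive iff $T\cap e^*\neq\emptyset$. A non-adaptive algorithm with $t$ tests is a sequence of pools $T_1,\dots,T_t\subseteq[n]$ fixed in advance; for $f\in E$ its response vector is $r(f)\in\{0,1\}^t$ with $i$-th entry $1$ iff $T_i\cap f\neq\emptyset$. The algorithm finds the defective hyperedge iff distinct hyperedges have distinct response vectors. Logarithms are to a fixed base. *)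

(* Defs.v *)
From mathcomp Require Import all_boot.
From Stdlib Require Import Reals.
Set Implicit Arguments. Unset Strict Implicit. Unset Printing Implicit Defensive.

(* Items are 'I_n (i.e. {0,...,n-1}, in bijection with [n]).
   A non-adaptive algorithm with t tests: pools T : 'I_t -> {set 'I_n}. *)
Definition response (n t : nat) (T : 'I_t -> {set 'I_n}) (f : {set 'I_n})
  : {ffun 'I_t -> bool} := [ffun i => T i :&: f != set0].

Definition finds_defective (n t : nat) (T : 'I_t -> {set 'I_n})
  (E : {set {set 'I_n}}) : Prop :=
  forall e e', e \in E -> e' \in E -> e != e' -> response T e != response T e'.

(* Main.v *)
Require Import Defs.
From mathcomp Require Import all_boot.
From Stdlib Require Import Reals Lra Lia ZArith.
From mathcomp Require Import all_boot zify.
Set Implicit Arguments. Unset Strict Implicit.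

Lemma bern m s : s <= m -> m ^ s * (m - s) <= m * (m - 1) ^ s.
Proof.
elim: s => [|s IH] hs; first by rewrite expn0 expn0 subn0; lia.
have IH' := IH (ltnW hs).
rewrite !expnS.
have h1 : m * (m - s.+1) <= (m - s) * (m - 1) by nia.
have h2 := leq_mul IH' (leqnn (m - 1)).
have h3 := leq_mul (leqnn (m ^ s)) h1.
nia.
Qed.
Lemma bern2 m s : 2 * s <= m -> m ^ s <= 2 * (m - 1) ^ s.
Proof.
move=> hs.
have hsm : s <= m by lia.
have h := @bern m s hsm.
case: m hs hsm h => [|m] hs hsm h; first by have -> : s = 0 by lia.
have: m.+1 ^ s * m.+1 <= 2 * (m.+1 - 1) ^ s * m.+1 by nia.
by rewrite leq_pmul2r.
Qed.

Definition testf n k (h : {ffun 'I_n -> 'I_k.+1}) : {set 'I_n} := [set i | h i == ord0].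
Definition sep n (T : {set 'I_n}) (q : {set 'I_n} * {set 'I_n}) : bool :=
  (T :&: q.1 == set0) != (T :&: q.2 == set0).

Definition Aset n k (S : {set 'I_n}) (x i : 'I_n) : {set 'I_k.+1} :=
  if i == x then [set ord0] else if i \in S then [set~ ord0] else setT.

Lemma cardF n m (A : 'I_n -> {set 'I_m}) :
  #|[set h : {ffun 'I_n -> 'I_m} | [forall i, h i \in A i]]| = \prod_i #|A i|.
Proof. rewrite -(cardsXn A). apply: eq_card => h. by rewrite !inE. Qed.

Lemma prodA n k (S : {set 'I_n}) x : x \in S -> 2 * #|S| <= k.+1 ->
  k.+1 ^ n <= 2 * k.+1 * \prod_i #|@Aset n k S x i|.
Proof.
move=> xS hS.
have -> : k.+1 ^ n = \prod_(i : 'I_n) k.+1 by rewrite prod_nat_const card_ord.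
rewrite (bigD1 x) //= [X in _ <= _ * X](bigD1 x) //= /Aset eqxx cards1 mul1n.
rewrite -mulnA mulnCA leq_pmul2l //.
rewrite (bigID (fun i => i \in S)) /= [X in _ <= _ * X](bigID (fun i => i \in S)) /=.
rewrite [X in _ <= _ * (_ * X)](eq_bigr (fun _ => k.+1)); last first.
  by move=> i /andP[/negbTE -> /negbTE ->]; rewrite cardsT card_ord.
rewrite [X in _ <= _ * (X * _)](eq_bigr (fun _ => k)); last first.
  by move=> i /andP[/negbTE -> ->]; rewrite cardsC1 card_ord.
rewrite mulnA leq_pmul2r; last by rewrite prod_nat_const expn_gt0.
rewrite !prod_nat_const.
set s := #|_|.
have : s <= #|S|.
  by apply: subset_leq_card; apply/subsetP => i; rewrite unfold_in /= => /andP[].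
move=> hs. have := @bern2 k.+1 s. rewrite subn1 /=. apply. lia.
Qed.

Lemma count_sep n k d p (e e' : {set 'I_n}) : #|e| <= d -> #|e'| <= d ->
  p <= #|e' :\: e| -> 4 * d = k.+1 ->
  p * k.+1 ^ n <= 8 * d * #|[set h : {ffun 'I_n -> 'I_k.+1} | sep (testf h) (e, e')]|.
Proof.
move=> he he' hp hk.
set S := e :|: e'. set D := e' :\: e.
pose Ax x := [set h : {ffun 'I_n -> 'I_k.+1} | [forall i, h i \in @Aset n k S x i]].
have h1 : forall x, x \in D -> k.+1 ^ n <= 8 * d * #|Ax x|.
  move=> x xD. rewrite cardF. have -> : 8 * d = 2 * k.+1 by lia.
  apply: prodA.
    by move: xD; rewrite !inE => /andP[_ ->]; rewrite orbT.
  have := cardsU e e'. rewrite -/S. lia.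
have h2 : \sum_(x in D) #|Ax x| <=
    #|[set h : {ffun 'I_n -> 'I_k.+1} | sep (testf h) (e, e')]|.
  have E1 : forall (A : {set {ffun 'I_n -> 'I_k.+1}}),
      #|A| = \sum_h (if h \in A then 1 else 0).
    by move=> A; rewrite -sum1_card big_mkcond.
  rewrite E1; under eq_bigr => x _ do rewrite E1.
  rewrite exchange_big /=. apply: leq_sum => h _.
  case: (boolP [exists x in D, h \in Ax x]).
    case/existsP => x0 /andP[x0D hx0]. rewrite (bigD1 x0) //= hx0 big1 ?addn0.
      have Hx0 : forall i, h i \in Aset k S x0 i by move: hx0; rewrite inE => /forallP.
      move: x0D; rewrite inE => /andP[x0e x0e'].
      rewrite inE /sep /=.
      have -> : testf h :&: e == set0.
        apply/eqP/setP => i; rewrite !inE; case ie: (i \in e); rewrite ?andbF //= andbT.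
        have := Hx0 i; rewrite /Aset.
        have -> : (i == x0) = false by apply/negbTE; apply: contraNneq x0e => <-; rewrite ie.
        by rewrite /S inE ie /= in_setC1 => /negbTE.
      have -> : testf h :&: e' == set0 = false.
        apply/negbTE/set0Pn; exists x0; rewrite !inE x0e' andbT.
        by have := Hx0 x0; rewrite /Aset eqxx in_set1.
      by [].
    move=> y /andP[yD ynx]. case: ifP => // hy.
    have Hx0 : forall i, h i \in Aset k S x0 i by move: hx0; rewrite inE => /forallP.
    have Hy : forall i, h i \in Aset k S y i by move: hy; rewrite inE => /forallP.
    have := Hx0 y; have := Hy y; rewrite /Aset eqxx (negbTE ynx) in_set1 => /eqP ->.
    move: yD; rewrite /S !inE => /andP[_ ->]. by rewrite orbT in_setC1 eqxx.
  rewrite negb_exists_in => /forall_inP H.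
  rewrite big1 // => x xD. by rewrite (negbTE (H x xD)).
apply: leq_trans (_ : \sum_(x in D) k.+1 ^ n <= _).
  by rewrite sum_nat_const leq_mul2r hp orbT.
apply: leq_trans (_ : \sum_(x in D) 8 * d * #|Ax x| <= _).
  by apply: leq_sum => x xD; apply: h1.
by rewrite -big_distrr leq_mul2l h2 orbT.
Qed.

Lemma card_split (T : finType) (P : {set T}) (b : pred T) :
  #|[set q in P | b q]| + #|[set q in P | ~~ b q]| = #|P|.
Proof.
rewrite -[RHS]sum1_card (bigID b) /= -!sum1_card.
by congr (_ + _); apply: eq_bigl => q; rewrite !inE.
Qed.

Lemma card_cond (T : finType) (P : {set T}) (b : pred T) :
  #|[set q in P | b q]| = \sum_(q in P) (if b q then 1 else 0).
Proof.
rewrite -sum1_card -big_mkcondr /=. apply: eq_bigl => q; by rewrite !inE.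
Qed.

Section Greedy.
Variables (n k p c : nat).
Notation H := {ffun 'I_n -> 'I_k.+1}.
Notation pair := ({set 'I_n} * {set 'I_n})%type.

Lemma avg (P : {set pair}) :
  (forall q, q \in P -> p * k.+1 ^ n <= c * #|[set h : H | sep (testf h) q]|) ->
  exists h : H, p * #|P| <= c * #|[set q in P | sep (testf h) q]|.
Proof.
move=> HP.
case: (boolP [exists h : H, p * #|P| <= c * #|[set q in P | sep (testf h) q]|]).
  by case/existsP => h ?; exists h.
rewrite negb_exists => /forallP Hn. exfalso.
have Hlt : forall h : H, c * #|[set q in P | sep (testf h) q]| < p * #|P|.
  by move=> h; rewrite ltnNge Hn.
have S1 : \sum_(h : H) c * #|[set q in P | sep (testf h) q]| < \sum_(h : H) p * #|P|.
  rewrite (bigD1 [ffun => ord0]) //= [X in _ < X](bigD1 [ffun => ord0]) //=.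
  rewrite -addSn; apply: leq_add; first exact: Hlt.
  by apply: leq_sum => h _; apply: ltnW.
move: S1. rewrite sum_nat_const card_ffun !card_ord -big_distrr /=.
have -> : \sum_(h : H) #|[set q in P | sep (testf h) q]| =
    \sum_(q in P) #|[set h : H | sep (testf h) q]|.
  rewrite [LHS](eq_bigr (fun h : H => \sum_(q in P) (if sep (testf h) q then 1 else 0))); last first.
    by move=> h _; rewrite (card_cond P (fun q => sep (testf h) q)).
  rewrite exchange_big /=. apply: eq_bigr => q _.
  rewrite -sum1_card [RHS]big_mkcond /=; apply: eq_bigr => h _; by rewrite inE.
rewrite big_distrr /=.
have : \sum_(q in P) p * k.+1 ^ n <= \sum_(q in P) c * #|[set h : H | sep (testf h) q]|.
  by apply: leq_sum => q /HP.
rewrite sum_nat_const. move=> h1 h2. have := leq_ltn_trans h1 h2.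
have -> : #|P| * (p * k.+1 ^ n) = k.+1 ^ n * (p * #|P|) by lia. by rewrite ltnn.
Qed.

Definition unsep (s : seq {set 'I_n}) (P : {set pair}) :=
  [set q in P | all (fun T => ~~ sep T q) s].

Lemma greedy (P0 : {set pair}) t :
  (forall q, q \in P0 -> p * k.+1 ^ n <= c * #|[set h : H | sep (testf h) q]|) ->
  exists s : seq {set 'I_n}, size s = t /\
    c ^ t * #|unsep s P0| <= (c - p) ^ t * #|P0|.
Proof.
move=> HP0. elim: t => [|t [s [hs IH]]].
  exists [::]; split => //. rewrite !expn0 !mul1n. apply: subset_leq_card.
  by apply/subsetP => q; rewrite inE => /andP[].
have [h Hh] : exists h : H, p * #|unsep s P0| <= c * #|[set q in unsep s P0 | sep (testf h) q]|.
  apply: avg => q; rewrite inE => /andP[/HP0 ? _] //.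
exists (testf h :: s); split; first by rewrite /= hs.
have E : unsep (testf h :: s) P0 = [set q in unsep s P0 | ~~ sep (testf h) q].
  apply/setP => q; rewrite !inE /=.
  by case: (q \in P0); case: (sep _ _); case: (all _ _).
rewrite E.
have Hs := card_split (unsep s P0) (fun q => sep (testf h) q).
set X := #|[set q in _ | sep _ _]| in Hh Hs.
set Y := #|[set q in _ | ~~ sep _ _]| in Hs *.
set Pn := #|unsep s P0| in Hh Hs IH.
have h1 : c * Y <= (c - p) * Pn.
  rewrite mulnBl. rewrite -Hs mulnDr. lia.
rewrite !expnS.
apply: leq_trans (_ : c ^ t * ((c - p) * Pn) <= _).
  by rewrite -mulnA mulnCA leq_mul2l h1 orbT.
by rewrite mulnCA -mulnA leq_mul2l IH orbT.
Qed.
End Greedy.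

Section RealPart.
Local Open Scope R_scope.
Lemma exp_pow x t : exp x ^ t = exp (INR t * x).
Proof.
induction t as [|t IH].
{ simpl. rewrite Rmult_0_l exp_0; reflexivity. }
change (exp x ^ S t) with (exp x * exp x ^ t).
rewrite IH S_INR -exp_plus. f_equal. ring.
Qed.

Lemma INR_expn m t : INR (m ^ t)%N = INR m ^ t.
Proof.
induction t as [|t IH]. { reflexivity. }
rewrite expnS. rewrite -multE mult_INR IH. reflexivity.
Qed.

Lemma choose_t (c p N : nat) : (0 < p)%N -> (p <= c)%N -> (2 <= N)%N ->
  exists t, ((c - p) ^ t * (N * N) < c ^ t)%N /\
    INR t <= 2 * (INR c / INR p) * ln (INR N) + 1.
Proof.
intros hp hpc hN. move/ltP: hp => hp. move/leP: hpc => hpc. move/leP: hN => hN.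
assert (Hp : 0 < INR p) by (apply lt_0_INR; lia).
assert (Hc : INR p <= INR c) by (apply le_INR; lia).
assert (HN : 2 <= INR N) by (replace 2 with (INR 2) by (simpl; ring); apply le_INR; lia).
assert (HlnN : 0 < ln (INR N)).
{ rewrite -ln_1. apply ln_increasing; lra. }
set (x := 2 * (INR c / INR p) * ln (INR N)).
assert (Hx : 0 < x).
{ unfold x. apply Rmult_lt_0_compat; [|lra]. apply Rmult_lt_0_compat; [lra|].
  apply Rdiv_lt_0_compat; lra. }
destruct (archimed x) as [Hup1 Hup2].
assert (Hz : (0 <= up x)%Z).
{ apply le_IZR. lra. }
exists (Z.to_nat (up x)).
assert (Ht : INR (Z.to_nat (up x)) = IZR (up x)).
{ rewrite INR_IZR_INZ. rewrite Z2Nat.id; auto. }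
set (t := Z.to_nat (up x)) in *.
split; [| lra].
apply/ltP. apply INR_lt. rewrite -!multE !mult_INR !INR_expn subnE minus_INR; [|exact hpc].
set (c' := INR c) in *. set (p' := INR p) in *. set (N' := INR N) in *.
set (r := p' / c').
assert (Hc0 : 0 < c') by lra.
assert (Hr : 0 < r) by (unfold r; apply Rdiv_lt_0_compat; lra).
assert (Hr1 : r <= 1) by (unfold r; apply (Rmult_le_reg_r c'); [lra|]; field_simplify; lra).
replace (c' - p') with (c' * (1 - r)) by (unfold r; field; lra).
rewrite Rpow_mult_distr.
assert (Hct : 0 < c' ^ t) by (apply pow_lt; lra).
assert (Key : (1 - r) ^ t * (N' * N') < 1).
{ assert (H1 : (1 - r) ^ t <= exp (- r) ^ t).
  { apply pow_incr. split; [lra|]. pose proof (exp_ineq1_le (- r)). lra. }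
  rewrite exp_pow in H1.
  assert (H2 : r * INR t > 2 * ln N').
  { rewrite Ht. unfold r. unfold x in Hup1. 
    apply (Rmult_lt_reg_l (c' / p')). apply Rdiv_lt_0_compat; lra.
    replace (c' / p' * (p' / c' * IZR (up x))) with (IZR (up x)) by (field; lra).
    replace (c' / p' * (2 * ln N')) with (2 * (c' / p') * ln N') by ring. unfold x. exact Hup1. }
  assert (H3 : exp (INR t * - r) < exp (- (2 * ln N'))).
  { apply exp_increasing. lra. }
  assert (H4 : exp (- (2 * ln N')) * (N' * N') = 1).
  { replace (N' * N') with (exp (ln N') * exp (ln N')) by (rewrite exp_ln; [reflexivity|lra]).
    rewrite -!exp_plus.
    replace (- (2 * ln N') + (ln N' + ln N')) with 0 by ring. apply exp_0. }
  assert (HN2 : 0 < N' * N') by nra.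
  nra. }
nra.
Qed.

Lemma final_bound (d p N t : nat) : (0 < p)%N -> (p <= d)%N -> (1 < N)%N ->
  INR t <= 2 * (INR (8 * d) / INR p) * ln (INR N) + 1 ->
  INR t <= 18 * (INR d / INR p) * ln (INR N).
Proof.
move=> hp hpd hN Hbound.
apply: Rle_trans Hbound _.
  have Hp : (0 < INR p) by apply: lt_0_INR; apply/ltP; exact hp.
  have Hpd : (INR p <= INR d) by apply: le_INR; apply/leP; exact hpd.
  have HN : (2 <= INR N).
    have -> : (2 = INR 2) by rewrite /= ; lra.
    apply: le_INR; apply/leP; lia.
  have HL : (/ 2 < ln (INR N)).
    case: (Rle_lt_or_eq_dec _ _ HN) => hh; last by rewrite -hh; exact ln_lt_2.
    apply: Rlt_trans ln_lt_2 (ln_increasing _ _ _ hh); lra.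
  have Ha : (1 <= INR d / INR p).
    apply: (Rmult_le_reg_r (INR p)) => //. rewrite Rmult_1_l /Rdiv Rmult_assoc Rinv_l; lra.
  have -> : (INR (8 * d) / INR p = 8 * (INR d / INR p)).
    rewrite -multE mult_INR. have -> : INR 8 = 8 by rewrite /=; lra. rewrite /Rdiv; ring.
  set a := (INR d / INR p) in Ha *. set L := ln _ in HL *.
  nra.
Qed.

End RealPart.

Theorem corollary1 :
  exists C : R, Rlt 0 C /\
  forall (d n : nat) (E : {set {set 'I_n}}) (p : nat),
    (1 <= d)%N -> (d <= n)%N ->
    E != set0 ->
    (forall e, e \in E -> (#|e| <= d)%N) ->
    (1 <= p)%N ->
    (forall e e', e \in E -> e' \in E -> e != e' -> (p <= #|e' :\: e|)%N) ->
    exists (t : nat) (T : 'I_t -> {set 'I_n}),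
      Rle (INR t) (Rmult (Rmult C (Rdiv (INR d) (INR p))) (ln (INR #|E|))) /\
      finds_defective T E.
Proof.
exists (IZR 18); split; first lra.
move=> d n E p hd hdn hE hsz hp hsep.
have [e0 e0E] := set0Pn _ hE.
case: (leqP #|E| 1) => hN.
  exists 0, (fun _ => set0); split.
    have -> : #|E| = 1 by have := card_gt0 E; rewrite hE; lia.
    rewrite /= ln_1 Rmult_0_r; lra.
  move=> e e' he he' hne. exfalso.
  have /cards1P [x Ex] : #|E| == 1 by have := card_gt0 E; rewrite hE; lia.
  move: he he' hne; rewrite Ex !in_set1 => /eqP -> /eqP ->; by rewrite eqxx.
have hpd : (p <= d)%N.
  have : (0 < #|E :\ e0|)%N by have := cardsD1 e0 E; rewrite e0E; lia.
  rewrite card_gt0 => /set0Pn [e1]; rewrite !inE => /andP[ne1 e1E].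
  apply: leq_trans (hsep _ _ e1E e0E ne1) _.
  apply: leq_trans (hsz _ e0E). apply: subset_leq_card. apply: subsetDl.
set k := (4 * d).-1.
have hk : 4 * d = k.+1 by rewrite /k prednK //; lia.
set P0 := [set q : {set 'I_n} * {set 'I_n} | [&& q.1 \in E, q.2 \in E & q.1 != q.2]].
have Good : forall q, q \in P0 -> (p * k.+1 ^ n <= (8 * d) * #|[set h : {ffun 'I_n -> 'I_k.+1} | sep (testf h) q]|)%N.
  case=> e e'; rewrite inE /= => /and3P[he he' hne].
  apply: count_sep => //; [exact: hsz | exact: hsz | exact: hsep].
have [t [ht Hbound]] := @choose_t (8 * d) p #|E| hp ltac:(lia) hN.
have [s [hs Hs]] := greedy t Good.
have HP0 : (#|P0| <= #|E| * #|E|)%N.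
  rewrite -cardsX. apply: subset_leq_card. apply/subsetP => -[e e']; rewrite !inE /= => /and3P[-> -> _] //.
have Hun : unsep s P0 = set0.
  apply: cards0_eq. move: Hs Hbound HP0 ht. 
  set U := #|unsep s P0|. set a := (8 * d) ^ t. set b := (8 * d - p) ^ t.
  move=> Hs Hbound HP0 ht.
  have := leq_mul (leqnn b) HP0. move=> h2.
  case: U Hs => // U Hs. exfalso. have h3 : (a <= a * U.+1)%N by rewrite leq_pmulr. have := leq_trans h3 (leq_trans Hs h2). by rewrite leqNgt ht.
exists (size s), (fun i => nth set0 s i); split.
  rewrite hs.
  exact: final_bound hp hpd hN Hbound.
move=> e e' he he' hne.
have : (e, e') \notin unsep s P0 by rewrite Hun inE.
rewrite inE (_ : (e, e') \in P0) /=; last by rewrite inE /= he he' hne.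
rewrite -has_predC => /hasP [T Ts /= /negbNE hT].
have hi : (index T s < size s)%N by rewrite index_mem.
apply/negP => /eqP Hr.
have := congr1 (fun f : {ffun 'I_(size s) -> bool} => f (Ordinal hi)) Hr. rewrite /response !ffunE /= nth_index //.
move: hT; rewrite /sep /=. by case: (_ == set0); case: (_ == set0).
Qed.
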